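(* Let $\{e^1,e^2,e^3,e^4\}$ be a basis of $\mathbb{R}^4$, let $a,b,c\in\mathbb{R}$ with $a\ne0$, set $\Delta=b^2-4ac$, and let $\Lambda=\langle e^{12}+e^{34},\ e^{13}+e^{42},\ ae^{14}+be^{42}+ce^{23}\rangle\subseteq\Lambda^2\mathbb{R}^4$. Then there exists a linear transformation $\theta$ of $\mathbb{R}^4$ (acting on $\Lambda^2\mathbb{R}^4$ in the induced way) such that: if $\Delta<0$, $\Lambda=\theta(\langle e^{12}+e^{34},\,e^{13}+e^{42},\,e^{14}+e^{23}\rangle)$; if $\Delta=0$, $\Lambda=\theta(\langle e^{12}+e^{34},\,e^{13},\,e^{14}+e^{23}\rangle)$; if $\Delta>0$, $\Lambda=\theta(\langle e^{12}+e^{34},\,e^{13},\,e^{24}\rangle)$.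
   Context: $e^{ij}$ abbreviates $e^i\wedge e^j$. *)

(* Defs.v *)
From HB Require Import structures.
From mathcomp Require Import all_boot all_order all_algebra.
From mathcomp Require Import reals.
Set Implicit Arguments. Unset Strict Implicit. Unset Printing Implicit Defensive.
Import Order.TTheory GRing.Theory Num.Theory.
Local Open Scope ring_scope.

(* Lambda^2 R^4 is modelled as skew-symmetric 4x4 real matrices:
   the 2-form sum_{i<j} w_ij e^i /\ e^j corresponds to the matrix with
   (i,j) entry w_ij and (j,i) entry -w_ij.  Vectors of R^4 are row
   vectors, e^i is the i-th standard row vector, and u /\ v corresponds
   to u^T v - v^T u. *)

(* e^{ij} with 1-based indices i, j in {1,2,3,4}, as in the paper. *)
Definition e2 (R : ringType) (i j : nat) : 'M[R]_4 :=
  delta_mx (@inord 3 i.-1) (@inord 3 j.-1) - delta_mx (@inord 3 j.-1) (@inord 3 i.-1).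

(* Induced action of theta (acting on row vectors v |-> v *m theta) on
   2-forms: theta(u /\ v) = (u theta) /\ (v theta) = theta^T (u^T v - v^T u) theta. *)
Definition act2 (R : ringType) (theta : 'M[R]_4) (w : 'M[R]_4) : 'M[R]_4 :=
  theta^T *m w *m theta.

Definition span3 (R : fieldType) (u v w : 'M[R]_4) : {vspace 'M[R]_4} :=
  <<[:: u; v; w]>>%VS.

(* Main.v *)
Require Import Defs.
From HB Require Import structures.
From mathcomp Require Import all_boot all_order all_algebra.
From mathcomp Require Import reals ring lra zify.
Import Order.TTheory GRing.Theory Num.Theory.
Local Open Scope ring_scope.

Ltac nz := repeat (apply/andP; split); (assumption || done || by rewrite pnatr_eq0).

Section S.
Variable R : realType.

Lemma in_span3 al be ga (u v w x : 'M[R]_4) :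
  x = al *: u + be *: v + ga *: w -> x \in span3 u v w.
Proof.
move=> ->; rewrite /span3.
by rewrite !memvD // memvZ // memv_span // !inE eqxx ?orbT.
Qed.

Lemma span3_eq (u v w u' v' w' : 'M[R]_4) :
  u' \in span3 u v w -> v' \in span3 u v w -> w' \in span3 u v w ->
  u \in span3 u' v' w' -> v \in span3 u' v' w' -> w \in span3 u' v' w' ->
  span3 u v w = span3 u' v' w'.
Proof.
move=> h1 h2 h3 h4 h5 h6; apply/eqP; rewrite eqEsubv.
apply/andP; split; apply/span_subvP => x; rewrite !inE => /or3P [] /eqP -> //.
Qed.

Lemma e2E i j : (0 < i <= 4)%N -> (0 < j <= 4)%N ->
  e2 R i j = \matrix_(p, q) (((p == i.-1 :> nat) && (q == j.-1 :> nat))%:R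
                           - ((p == j.-1 :> nat) && (q == i.-1 :> nat))%:R).
Proof.
move=> /andP[hi0 hi] /andP[hj0 hj]; apply/matrixP => p q.
rewrite /e2 !mxE -!val_eqE /= !inordK //; lia.
Qed.

Lemma sum4 (F : 'I_4 -> R) : \sum_(k < 4) F k =
  F (@Ordinal 4 0 isT) + F (@Ordinal 4 1 isT) + F (@Ordinal 4 2 isT) + F (@Ordinal 4 3 isT).
Proof.
rewrite !big_ord_recr big_ord0 /= add0r.
by congr (F _ + F _ + F _ + F _); apply/val_inj.
Qed.

Definition M4 (a00 a01 a02 a03 a10 a11 a12 a13 a20 a21 a22 a23 a30 a31 a32 a33 : R) : 'M[R]_4 :=
  \matrix_(i, j) nth 0 (nth [::] [:: [:: a00; a01; a02; a03]; [:: a10; a11; a12; a13]; [:: a20; a21; a22; a23]; [:: a30; a31; a32; a33]] i) j.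

Lemma M4_add a00 a01 a02 a03 a10 a11 a12 a13 a20 a21 a22 a23 a30 a31 a32 a33 b00 b01 b02 b03 b10 b11 b12 b13 b20 b21 b22 b23 b30 b31 b32 b33 :
  M4 a00 a01 a02 a03 a10 a11 a12 a13 a20 a21 a22 a23 a30 a31 a32 a33 + M4 b00 b01 b02 b03 b10 b11 b12 b13 b20 b21 b22 b23 b30 b31 b32 b33 = M4 (a00 + b00) (a01 + b01) (a02 + b02) (a03 + b03) (a10 + b10) (a11 + b11) (a12 + b12) (a13 + b13) (a20 + b20) (a21 + b21) (a22 + b22) (a23 + b23) (a30 + b30) (a31 + b31) (a32 + b32) (a33 + b33).
Proof. apply/matrixP => i j; rewrite /M4 !mxE ?sum4 ?mxE; case: i => [[|[|[|[|i]]]] hi] //; case: j => [[|[|[|[|j]]]] hj] //. Qed.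

Lemma M4_scale k a00 a01 a02 a03 a10 a11 a12 a13 a20 a21 a22 a23 a30 a31 a32 a33 :
  k *: M4 a00 a01 a02 a03 a10 a11 a12 a13 a20 a21 a22 a23 a30 a31 a32 a33 = M4 (k * a00) (k * a01) (k * a02) (k * a03) (k * a10) (k * a11) (k * a12) (k * a13) (k * a20) (k * a21) (k * a22) (k * a23) (k * a30) (k * a31) (k * a32) (k * a33).
Proof. apply/matrixP => i j; rewrite /M4 !mxE ?sum4 ?mxE; case: i => [[|[|[|[|i]]]] hi] //; case: j => [[|[|[|[|j]]]] hj] //. Qed.

Lemma M4_tr a00 a01 a02 a03 a10 a11 a12 a13 a20 a21 a22 a23 a30 a31 a32 a33 :
  (M4 a00 a01 a02 a03 a10 a11 a12 a13 a20 a21 a22 a23 a30 a31 a32 a33)^T = M4 (a00) (a10) (a20) (a30) (a01) (a11) (a21) (a31) (a02) (a12) (a22) (a32) (a03) (a13) (a23) (a33).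
Proof. apply/matrixP => i j; rewrite /M4 !mxE ?sum4 ?mxE; case: i => [[|[|[|[|i]]]] hi] //; case: j => [[|[|[|[|j]]]] hj] //. Qed.

Lemma M4_mul a00 a01 a02 a03 a10 a11 a12 a13 a20 a21 a22 a23 a30 a31 a32 a33 b00 b01 b02 b03 b10 b11 b12 b13 b20 b21 b22 b23 b30 b31 b32 b33 :
  M4 a00 a01 a02 a03 a10 a11 a12 a13 a20 a21 a22 a23 a30 a31 a32 a33 *m M4 b00 b01 b02 b03 b10 b11 b12 b13 b20 b21 b22 b23 b30 b31 b32 b33 = M4 (a00 * b00 + a01 * b10 + a02 * b20 + a03 * b30) (a00 * b01 + a01 * b11 + a02 * b21 + a03 * b31) (a00 * b02 + a01 * b12 + a02 * b22 + a03 * b32) (a00 * b03 + a01 * b13 + a02 * b23 + a03 * b33) (a10 * b00 + a11 * b10 + a12 * b20 + a13 * b30) (a10 * b01 + a11 * b11 + a12 * b21 + a13 * b31) (a10 * b02 + a11 * b12 + a12 * b22 + a13 * b32) (a10 * b03 + a11 * b13 + a12 * b23 + a13 * b33) (a20 * b00 + a21 * b10 + a22 * b20 + a23 * b30) (a20 * b01 + a21 * b11 + a22 * b21 + a23 * b31) (a20 * b02 + a21 * b12 + a22 * b22 + a23 * b32) (a20 * b03 + a21 * b13 + a22 * b23 + a23 * b33) (a30 * b00 + a31 * b10 + a32 * b20 + a33 * b30) (a30 * b01 + a31 * b11 + a32 * b21 + a33 * b31) (a30 * b02 + a31 * b12 + a32 * b22 + a33 * b32) (a30 * b03 + a31 *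 b13 + a32 * b23 + a33 * b33).
Proof. apply/matrixP => i j; rewrite /M4 !mxE ?sum4 ?mxE; case: i => [[|[|[|[|i]]]] hi] //; case: j => [[|[|[|[|j]]]] hj] //. Qed.

Lemma M4_1 : 1%:M = M4 (1) (0) (0) (0) (0) (1) (0) (0) (0) (0) (1) (0) (0) (0) (0) (1).
Proof. apply/matrixP => i j; rewrite /M4 !mxE ?sum4 ?mxE; case: i => [[|[|[|[|i]]]] hi] //; case: j => [[|[|[|[|j]]]] hj] //. Qed.

Lemma e2_12 : e2 R 1 2 = M4 (0) (1) (0) (0) (-1) (0) (0) (0) (0) (0) (0) (0) (0) (0) (0) (0).
Proof. rewrite e2E //; apply/matrixP => i j; rewrite /M4 !mxE ?sum4 ?mxE; case: i => [[|[|[|[|i]]]] hi] //; case: j => [[|[|[|[|j]]]] hj] //; by rewrite /= ?subr0 ?sub0r ?subrr. Qed.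

Lemma e2_34 : e2 R 3 4 = M4 (0) (0) (0) (0) (0) (0) (0) (0) (0) (0) (0) (1) (0) (0) (-1) (0).
Proof. rewrite e2E //; apply/matrixP => i j; rewrite /M4 !mxE ?sum4 ?mxE; case: i => [[|[|[|[|i]]]] hi] //; case: j => [[|[|[|[|j]]]] hj] //; by rewrite /= ?subr0 ?sub0r ?subrr. Qed.

Lemma e2_13 : e2 R 1 3 = M4 (0) (0) (1) (0) (0) (0) (0) (0) (-1) (0) (0) (0) (0) (0) (0) (0).
Proof. rewrite e2E //; apply/matrixP => i j; rewrite /M4 !mxE ?sum4 ?mxE; case: i => [[|[|[|[|i]]]] hi] //; case: j => [[|[|[|[|j]]]] hj] //; by rewrite /= ?subr0 ?sub0r ?subrr. Qed.

Lemma e2_42 : e2 R 4 2 = M4 (0) (0) (0) (0) (0) (0) (0) (-1) (0) (0) (0) (0) (0) (1) (0) (0).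
Proof. rewrite e2E //; apply/matrixP => i j; rewrite /M4 !mxE ?sum4 ?mxE; case: i => [[|[|[|[|i]]]] hi] //; case: j => [[|[|[|[|j]]]] hj] //; by rewrite /= ?subr0 ?sub0r ?subrr. Qed.

Lemma e2_14 : e2 R 1 4 = M4 (0) (0) (0) (1) (0) (0) (0) (0) (0) (0) (0) (0) (-1) (0) (0) (0).
Proof. rewrite e2E //; apply/matrixP => i j; rewrite /M4 !mxE ?sum4 ?mxE; case: i => [[|[|[|[|i]]]] hi] //; case: j => [[|[|[|[|j]]]] hj] //; by rewrite /= ?subr0 ?sub0r ?subrr. Qed.

Lemma e2_23 : e2 R 2 3 = M4 (0) (0) (0) (0) (0) (0) (1) (0) (0) (-1) (0) (0) (0) (0) (0) (0).
Proof. rewrite e2E //; apply/matrixP => i j; rewrite /M4 !mxE ?sum4 ?mxE; case: i => [[|[|[|[|i]]]] hi] //; case: j => [[|[|[|[|j]]]] hj] //; by rewrite /= ?subr0 ?sub0r ?subrr. Qed.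

Lemma e2_24 : e2 R 2 4 = M4 (0) (0) (0) (0) (0) (0) (0) (1) (0) (0) (0) (0) (0) (-1) (0) (0).
Proof. rewrite e2E //; apply/matrixP => i j; rewrite /M4 !mxE ?sum4 ?mxE; case: i => [[|[|[|[|i]]]] hi] //; case: j => [[|[|[|[|j]]]] hj] //; by rewrite /= ?subr0 ?sub0r ?subrr. Qed.

Definition Lam (a b c : R) := span3 (e2 R 1 2 + e2 R 3 4) (e2 R 1 3 + e2 R 4 2)
                   (a *: e2 R 1 4 + b *: e2 R 4 2 + c *: e2 R 2 3).

Ltac mx := rewrite /act2 !(e2_12, e2_34, e2_13, e2_42, e2_14, e2_23, e2_24, M4_tr, M4_mul, M4_scale, M4_add);
  congr M4; field; nz.



Lemma case_neg (a b k : R) : a != 0 -> k != 0 ->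
  exists theta : 'M[R]_4, theta \in unitmx /\
    Lam a b ((k^+2 + b^+2/4)/a) = span3 (act2 theta (e2 R 1 2 + e2 R 3 4))
                              (act2 theta (e2 R 1 3 + e2 R 4 2))
                              (act2 theta (e2 R 1 4 + e2 R 2 3)).
Proof.
move=> ha hk.
exists (M4 a (-b/2) 0 0 0 k 0 0 0 0 k 0 0 0 (-b/2) a); split.
  apply: (proj1 (@mulmx1_unit _ _ _ (M4 (1/a) (b/(2*a*k)) 0 0 0 (1/k) 0 0 0 0 (1/k) 0 0 0 (b/(2*a*k)) (1/a)) _)).
  rewrite M4_mul M4_1; congr M4; field; nz.
rewrite /Lam; apply: span3_eq.
- apply: (in_span3 (k*a) 0 0); mx.
- apply: (in_span3 0 (k*a) 0); mx.
- apply: (in_span3 0 (-a*b/2) a); mx.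
- apply: (in_span3 (1/(k*a)) 0 0); mx.
- apply: (in_span3 0 (1/(k*a)) 0); mx.
- apply: (in_span3 0 (b/(2*k*a)) (1/a)); mx.
Qed.

Lemma case_zero (a b : R) : a != 0 ->
  exists theta : 'M[R]_4, theta \in unitmx /\
    Lam a b (b^+2/(4*a)) = span3 (act2 theta (e2 R 1 2 + e2 R 3 4))
                              (act2 theta (e2 R 1 3))
                              (act2 theta (e2 R 1 4 + e2 R 2 3)).
Proof.
move=> ha.
exists (M4 (-a) (b/2) 0 0 0 1 0 0 0 0 (-b/2) a 0 0 1 0); split.
  apply: (proj1 (@mulmx1_unit _ _ _ (M4 (-1/a) (b/(2*a)) 0 0 0 1 0 0 0 0 0 1 0 0 (1/a) (b/(2*a))) _)).
  rewrite M4_mul M4_1; congr M4; field; nz.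
rewrite /Lam; apply: span3_eq.
- apply: (in_span3 (-a) 0 0); mx.
- apply: (in_span3 0 (a*b/2) (-a)); mx.
- apply: (in_span3 0 (-a) 0); mx.
- apply: (in_span3 (-1/a) 0 0); mx.
- apply: (in_span3 0 0 (-1/a)); mx.
- apply: (in_span3 0 (-1/a) (-b/(2*a))); mx.
Qed.

Lemma case_pos (a r1 r2 : R) : a != 0 -> r1 - r2 != 0 ->
  exists theta : 'M[R]_4, theta \in unitmx /\
    Lam a (-(r1 + r2)) (r1 * r2 / a) = span3 (act2 theta (e2 R 1 2 + e2 R 3 4))
                              (act2 theta (e2 R 1 3))
                              (act2 theta (e2 R 2 4)).
Proof.
move=> ha hs.
exists (M4 a r2 0 0 a r1 0 0 0 0 r1 a 0 0 r2 a); split.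
  apply: (proj1 (@mulmx1_unit _ _ _ (M4 (r1/(a*(r1-r2))) (-r2/(a*(r1-r2))) 0 0 (-1/(r1-r2)) (1/(r1-r2)) 0 0 0 0 (1/(r1-r2)) (-1/(r1-r2)) 0 0 (-r2/(a*(r1-r2))) (r1/(a*(r1-r2)))) _)).
  rewrite M4_mul M4_1; congr M4; field; nz.
rewrite /Lam; apply: span3_eq.
- apply: (in_span3 (a*(r1-r2)) 0 0); mx.
- apply: (in_span3 0 (a*r1) a); mx.
- apply: (in_span3 0 (a*r2) a); mx.
- apply: (in_span3 (1/(a*(r1-r2))) 0 0); mx.
- apply: (in_span3 0 (1/(a*(r1-r2))) (-1/(a*(r1-r2)))); mx.
- apply: (in_span3 0 (1/a - r1/(a*(r1-r2))) (r1/(a*(r1-r2)))); mx.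
Qed.

End S.

Theorem lemma2p2 (R : realType) (a b c : R) (ha : a != 0) :
  let Delta := b ^+ 2 - 4 * a * c in
  let Lam := span3 (e2 R 1 2 + e2 R 3 4) (e2 R 1 3 + e2 R 4 2)
                   (a *: e2 R 1 4 + b *: e2 R 4 2 + c *: e2 R 2 3) in
  exists theta : 'M[R]_4, theta \in unitmx /\
    (Delta < 0 -> Lam = span3 (act2 theta (e2 R 1 2 + e2 R 3 4))
                              (act2 theta (e2 R 1 3 + e2 R 4 2))
                              (act2 theta (e2 R 1 4 + e2 R 2 3))) /\
    (Delta = 0 -> Lam = span3 (act2 theta (e2 R 1 2 + e2 R 3 4))
                              (act2 theta (e2 R 1 3))
                              (act2 theta (e2 R 1 4 + e2 R 2 3))) /\
    (0 < Delta -> Lam = span3 (act2 theta (e2 R 1 2 + e2 R 3 4))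
                              (act2 theta (e2 R 1 3))
                              (act2 theta (e2 R 2 4))).
Proof.
move=> Delta Lam0.
have -> : Lam0 = @Lam R a b c by [].
have HD : Delta = b ^+ 2 - 4 * a * c by [].
case: (ltgtP Delta 0) => hD.
- pose k := Num.sqrt (- Delta) / 2.
  have hk2 : k ^+ 2 = - Delta / 4.
    by rewrite /k expr_div_n sqr_sqrtr ?oppr_ge0 ?ltW // -natrX.
  have hk : k != 0.
    by rewrite /k mulf_neq0 ?invr_eq0 ?pnatr_eq0 // gt_eqF // sqrtr_gt0 oppr_gt0.
  have hc : (k^+2 + b^+2/4)/a = c by rewrite hk2 HD; field; nz.
  have [th [hu hS]] := @case_neg R a b k ha hk.
  rewrite hc in hS.
  exists th; split; first done.
  repeat split; first [done | (move=> _; exact hS) | by move=> h; move: hD; rewrite h ltxx].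
- have [s hs2 hs0] : exists2 s : R, s ^+ 2 = Delta & s != 0.
    exists (Num.sqrt Delta); first by rewrite sqr_sqrtr ?ltW.
    by rewrite gt_eqF // sqrtr_gt0.
  have [r1 e1] : exists r1 : R, (-b + s)/2 = r1 by eexists.
  have [r2 e2] : exists r2 : R, (-b - s)/2 = r2 by eexists.
  have hr : r1 - r2 != 0.
    have -> : r1 - r2 = s by rewrite -e1 -e2; field; nz.
    exact hs0.
  have hb : -(r1 + r2) = b by rewrite -e1 -e2; field; nz.
  have hc : r1 * r2 / a = c.
    have -> : r1*r2/a = (b^+2 - s^+2)/(4*a) by rewrite -e1 -e2; field; nz.
    rewrite hs2 HD; field; nz.
  have [th [hu hS]] := @case_pos R a r1 r2 ha hr.
  rewrite hb hc in hS.
  exists th; split; first done.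
  repeat split; first [done | (move=> _; exact hS) | by move=> h; move: hD; rewrite h ltxx].
- have hc : b^+2/(4*a) = c.
    apply/eqP; rewrite -subr_eq0; apply/eqP.
    transitivity ((b^+2 - 4*a*c)/(4*a)); first by field; nz.
    by rewrite -HD hD mul0r.
  have [th [hu hS]] := @case_zero R a b ha.
  rewrite hc in hS.
  exists th; split; first done.
  repeat split; first [done | (move=> _; exact hS) | by move=> h; move: hD; rewrite h ltxx].
Qed.
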